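(* Let $\mathcal{A}$ be a separating union-closed family with base set $[n]$ and height $h=4$, and let $\mathcal{B}=\{B_1,B_2,B_3\}$ be a choice of $\mathcal{B}(\mathcal{A})$ with $|\mathcal{B}|=3$. Suppose $|B|=n$, where $B=b(\mathcal{A}_{<n/2})$. Then for every $A \in \mathcal{A}_{<n/2}$ and every $i \in \{1,2,3\}$ with $|\mathrm{irr}_{\mathcal{B}}(B_i)| > 1$, we have $|A \cap \mathrm{irr}_{\mathcal{B}}(B_i)| \in \{0,\ |\mathrm{irr}_{\mathcal{B}}(B_i)|-1,\ |\mathrm{irr}_{\mathcal{B}}(B_i)|\}$.
   Context: A family of sets $\mathcal{A}$ is union-closed if it is a finite family of distinct finite sets with at least one nonempty member set, and $X,Y\in\mathcal{A}$ implies $X\cup Y\in\mathcal{A}$ (the empty set may be a member). For a family $\mathcal{F}$, $b(\mathcal{F})=\bigcup_{F\in\mathcal{F}}F$; the base set $b(\mathcal{A})$ is denoted $[n]=\{1,\dots,n\}$. $\mathcal{A}$ is separating if for any two distinct $x,y\in[n]$ there is $A\in\mathcal{A}$ containing exactly one of $x,y$. A chain in $\mathcal{A}$ is a subfamily any two distinct members of which are comparable under proper inclusion; the height $h$ of $\mathcal{A}$ is the maximum size of a chain in $\mathcal{A}$. For real $x\ge 0$, $\mathcal{A}_{<x}=\{A\in\mathcal{A} : |A|<x\}$. For $\mathcal{S}\subseteq\mathcal{A}$ and $S\in\mathcal{S}$, $\mathrm{irr}_{\mathcal{S}}(S)=\{s\in S : s\notin b(\mathcal{S}\setminus\{S\})\}$,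 and $\mathcal{S}$ is irredundant if $\mathrm{irr}_{\mathcal{S}}(S)\neq\emptyset$ for every $S\in\mathcal{S}$. With $B=b(\mathcal{A}_{<n/2})$, $\mathcal{B}(\mathcal{A})$ denotes any irredundant subfamily of $\mathcal{A}_{<n/2}$ of minimum size such that $b(\mathcal{B}(\mathcal{A}))=B$. *)

(* Defs.v *)
From mathcomp Require Import all_boot.
Set Implicit Arguments. Unset Strict Implicit. Unset Printing Implicit Defensive.

(* Ground set [n] is represented by 'I_n = {0,...,n-1}. A family of sets is
   an F : {set {set 'I_n}}; b(F) is [cover F] (the union of its members). *)

Definition union_closed (n : nat) (F : {set {set 'I_n}}) : Prop :=
  [/\ exists2 X, X \in F & X != set0,
      cover F = [set: 'I_n] &
      forall X Y, X \in F -> Y \in F -> X :|: Y \in F].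

Definition separating (n : nat) (F : {set {set 'I_n}}) : Prop :=
  forall x y : 'I_n, x != y -> exists2 X, X \in F & (x \in X) != (y \in X).

Definition is_chain (n : nat) (C : {set {set 'I_n}}) : bool :=
  [forall X in C, forall Y in C, (X != Y) ==> ((X \proper Y) || (Y \proper X))].

Definition height (n : nat) (F : {set {set 'I_n}}) : nat :=
  \max_(C in powerset F | is_chain C) #|C|.

(* F_{<x} for x = n/2 : members A with |A| < n/2, i.e. 2|A| < n *)
Definition small_half (n : nat) (F : {set {set 'I_n}}) : {set {set 'I_n}} :=
  [set X in F | (#|X|.*2 < n)%N].

Definition irr (n : nat) (S : {set {set 'I_n}}) (X : {set 'I_n}) : {set 'I_n} :=
  [set s in X | s \notin cover (S :\ X)].

Definition irredundant (n : nat) (S : {set {set 'I_n}}) : Prop :=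
  forall X, X \in S -> irr S X != set0.

(* Bf is a choice of B(F): an irredundant subfamily of F_{<n/2} of minimum
   size among those whose union is b(F_{<n/2}). *)
Definition is_Bfam (n : nat) (F Bf : {set {set 'I_n}}) : Prop :=
  [/\ Bf \subset small_half F, irredundant Bf,
      cover Bf = cover (small_half F) &
      forall Bf' : {set {set 'I_n}}, Bf' \subset small_half F -> irredundant Bf' ->
        cover Bf' = cover (small_half F) -> (#|Bf| <= #|Bf'|)%N].

(* Main.v *)
Require Import Defs.
From mathcomp Require Import all_boot.

Set Implicit Arguments. Unset Strict Implicit.
Section H.
Variable n : nat.
Implicit Types X Y : {set 'I_n}.

Definition prel : rel {set 'I_n} := fun X Y => X \proper Y.

Lemma prel_trans : transitive prel.
Proof. move=> X Y Z; exact: proper_trans. Qed.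

Lemma chain_seq (s : seq {set 'I_n}) :
  sorted prel s -> is_chain [set:: s] && (#|[set:: s]| == size s).
Proof.
move=> so; apply/andP; split; last first.
  rewrite cardsE; apply/eqP/card_uniqP.
  by apply: (sorted_uniq prel_trans) => // X; rewrite /prel properxx.
apply/forall_inP => X; rewrite inE => Xs; apply/forall_inP => Y; rewrite inE => Ys.
apply/implyP => nXY.
have iX := index_mem X s; have iY := index_mem Y s.
rewrite Xs in iX; rewrite Ys in iY.
have hom := sorted_ltn_nth prel_trans X so.
case: (ltngtP (index X s) (index Y s)) => h.
- have := hom _ _ iX iY h; by rewrite /prel !nth_index // => ->.
- have := hom _ _ iY iX h; by rewrite /prel !nth_index // => ->; rewrite orbT.
- have : nth X s (index X s) = nth X s (index Y s) by rewrite h.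
  by rewrite !nth_index // => E; rewrite E eqxx in nXY.
Qed.

Lemma properU_el X Y e : e \in Y -> e \notin X -> X \proper X :|: Y.
Proof.
move=> eY eX; rewrite properE subsetUl /=; apply/subsetPn; exists e => //.
by rewrite inE eY orbT.
Qed.

Lemma core (F : {set {set 'I_n}}) (Bj Bk A C D : {set 'I_n}) (w z x y : 'I_n) :
  (forall X Y, X \in F -> Y \in F -> X :|: Y \in F) ->
  Bj \in F -> Bk \in F -> A \in F -> C \in F -> D \in F ->
  w \in Bk -> w \notin Bj -> z \in A -> z \notin Bj -> z \notin Bk ->
  x \in C -> x \notin Bj -> x \notin Bk -> x \notin A ->
  y \notin C -> y \notin Bj -> y \notin Bk -> y \notin A -> y \in D ->
  5 <= height F.
Proof.
move=> UC Fj Fk FA FC FD wk wj zA zj zk xC xj xk xA yC yj yk yA yD.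
set X1 := Bj; set X2 := X1 :|: Bk; set X3 := X2 :|: A; set X4 := X3 :|: C;
set X5 := X4 :|: D.
have F2 : X2 \in F by apply: UC.
have F3 : X3 \in F by apply: UC.
have F4 : X4 \in F by apply: UC.
have F5 : X5 \in F by apply: UC.
have so : sorted prel [:: X1; X2; X3; X4; X5].
  rewrite /= andbT /prel; apply/and4P; split.
  - exact: (properU_el wk).
  - by apply: (properU_el zA); rewrite !inE negb_or zj zk.
  - by apply: (properU_el xC); rewrite !inE !negb_or xj xk xA.
  - by apply: (properU_el yD); rewrite !inE !negb_or yj yk yA yC.
have /andP[ch /eqP cd] := chain_seq so.
rewrite -[5]/(size [:: X1; X2; X3; X4; X5]) -cd /height.
apply: (leq_bigmax_cond (P := fun C => (C \in powerset F) && is_chain C)).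
rewrite ch andbT powersetE; apply/subsetP => X; rewrite !inE.
by move=> /orP[/eqP->|/orP[/eqP->|/orP[/eqP->|/orP[/eqP->|/eqP->]]]].
Qed.

End H.

Theorem propositionH (n : nat) (F Bf : {set {set 'I_n}}) :
  union_closed F -> separating F -> height F = 4 ->
  is_Bfam F Bf -> #|Bf| = 3 ->
  #|cover (small_half F)| = n ->
  forall A, A \in small_half F ->
  forall Bi, Bi \in Bf -> (1 < #|irr Bf Bi|)%N ->
    let k := #|A :&: irr Bf Bi| in
    k = 0 \/ k = #|irr Bf Bi|.-1 \/ k = #|irr Bf Bi|.
Proof.
move=> [_ covF UC] sep hF [sBf irrB _ _] c3 _ A As Bi Bii _ k.
have sF : small_half F \subset F by apply/subsetP => X; rewrite inE => /andP[].
have BfF : forall X, X \in Bf -> X \in F.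
  by move=> X XB; apply: (subsetP sF); apply: (subsetP sBf).
have AF : A \in F by apply: (subsetP sF).
have : #|Bf :\ Bi| == 2 by have := cardsD1 Bi Bf; rewrite Bii c3 => /eqP; rewrite eq_sym add1n eqSS.
case/cards2P => Bj [Bk [njk Ejk]].
have Bjin : Bj \in Bf :\ Bi by rewrite Ejk !inE eqxx.
have Bkin : Bk \in Bf :\ Bi by rewrite Ejk !inE eqxx orbT.
move: (Bjin) (Bkin); rewrite !inE => /andP[nji Bjf] /andP[nki Bkf].
have /set0Pn [w] := irrB _ Bkf.
rewrite inE => /andP[wk]; rewrite /cover => /bigcupP wn.
have wj : w \notin Bj.
  apply/negP => wj; apply: wn; exists Bj => //; by rewrite !inE njk.
have irrE : forall e, e \in irr Bf Bi -> (e \notin Bj) && (e \notin Bk).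
  move=> e; rewrite inE => /andP[_ en]; apply/andP; split; apply/negP => eb;
  move/negP: en; apply; apply/bigcupP; by [exists Bj | exists Bk].
have kle : k <= #|irr Bf Bi| by rewrite /k subset_leqif_cards // subsetIr.
case: (posnP k) => k0; first by left.
have /set0Pn [z] : A :&: irr Bf Bi != set0 by rewrite -card_gt0.
rewrite inE => /andP[zA /irrE /andP[zj zk]].
right; case: (k =P #|irr Bf Bi|.-1) => [->|h1]; first by left.
right; apply/eqP; rewrite eqn_leq kle /=; apply/negPn/negP; rewrite -ltnNge => lt.
have lt2 : k < #|irr Bf Bi|.-1.
  rewrite ltn_neqAle; apply/andP; split; first by apply/eqP.
  by rewrite -ltnS prednK // (leq_ltn_trans _ lt).
have : 1 < #|irr Bf Bi :\: A|.
  rewrite cardsD setIC -/k.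
  by rewrite ltn_subRL addn1 -(prednK (leq_ltn_trans (leq0n _) lt)) ltnS.
case/card_gt1P => x [y [xD yD nxy]].
move: xD yD; rewrite !in_setD => /andP[xA xI] /andP[yA yI].
have /andP[xj xk] := irrE _ xI.
have /andP[yj yk] := irrE _ yI.
have getD : forall e : 'I_n, exists2 D, D \in F & e \in D.
  move=> e; have : e \in cover F by rewrite covF inE.
  by case/bigcupP => D DF eD; exists D.
have [C CF sepC] := sep x y nxy.
suff : 5 <= height F by rewrite hF.
case xC: (x \in C) sepC => /= sepC.
- have yC : y \notin C by move: sepC; case: (y \in C).
  have [D DF yD] := getD y.
  exact: (core UC (BfF _ Bjf) (BfF _ Bkf) AF CF DF wk wj zA zj zk xC xj xk xA yC yj yk yA yD).
- have yC : y \in C by move: sepC; case: (y \in C).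
  have [D DF xD] := getD x.
  exact: (core UC (BfF _ Bjf) (BfF _ Bkf) AF CF DF wk wj zA zj zk yC yj yk yA (negbT xC) xj xk xA xD).
Qed.
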